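(* Let $G$ be a finite connected graph that is fractionally tiled by a single edge $H=K_2$. Let $f(K)$ denote the number of matchings of a graph $K$. Then $$f(G)^{1/|G|}\ge f(H)^{1/|H|}=2^{1/2}.$$
   Context: A matching is a set of pairwise vertex-disjoint edges (the empty matching counts, so $f(K_2)=2$). $|K|$ is the number of vertices. $H$ fractionally tiles $G$ means there is a finite list of subgraphs of $G$ isomorphic to $H$ such that every vertex of $G$ is covered by the same number of them. *)

(* Defs.v *)
From mathcomp Require Import all_boot all_order all_algebra.
From mathcomp Require Import all_classical all_reals all_analysis.
Set Implicit Arguments. Unset Strict Implicit. Unset Printing Implicit Defensive.

Definition simple_graph (T : finType) (e : rel T) : Prop :=
  symmetric e /\ irreflexive e.

Definition connected_graph (T : finType) (e : rel T) : Prop :=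
  0 < #|T| /\ forall x y : T, connect e x y.

Definition is_edge (T : finType) (e : rel T) (A : {set T}) : bool :=
  [exists x : T, [exists y : T, e x y && (A == [set x; y])]].

Definition is_matching (T : finType) (e : rel T) (M : {set {set T}}) : bool :=
  [forall A in M, is_edge e A] &&
  [forall A in M, forall B in M, (A != B) ==> [disjoint A & B]].

Definition num_matchings (T : finType) (e : rel T) : nat :=
  #|[set M : {set {set T} } | is_matching e M]|.

(* K_2 fractionally tiles G: a finite (nonempty) list of subgraphs of G isomorphic
   to K_2 -- i.e. edges {x,y} of G, repetitions allowed -- such that every vertex
   is covered by the same number of them. *)
Definition K2_fractionally_tiles (T : finType) (e : rel T) : Prop :=
  exists s : seq {set T},
    s != [::] /\ all (is_edge e) s /\
    exists k : nat, forall v : T, count (fun A : {set T} => v \in A) s = k.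

(* Main.v *)
Set Warnings "-all".
Set Implicit Arguments. Unset Strict Implicit. Unset Printing Implicit Defensive.
Require Import Defs.
From mathcomp Require Import all_boot all_order all_algebra.
From mathcomp Require Import all_classical all_reals all_analysis.
From mathcomp Require Import ring lra.
Import Order.TTheory GRing.Theory Num.Theory.


Section Comb.
Variables (T : finType) (e : rel T).
Hypothesis sg : simple_graph e.

Definition MS (U : {set T}) : {set {set {set T}}} :=
  [set M | is_matching e M && [forall A in M, A \subset U]].
Definition FF (U : {set T}) : nat := #|MS U|.

Lemma FF_setT : FF [set: T] = num_matchings e.
Proof.
rewrite /FF /MS /num_matchings; apply: eq_card => M; rewrite !inE.
case: (is_matching e M) => //=; apply/forall_inP => A _; by apply/fintype.subsetP => x; rewrite inE.
Qed.

Lemma MS_sub U M A : M \in MS U -> A \in M -> A \subset U.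
Proof. by rewrite inE => /andP[_ /forall_inP H] /H. Qed.

Lemma MS_match U M : M \in MS U -> is_matching e M.
Proof. by rewrite inE => /andP[]. Qed.

Lemma set0_MS U : finset.set0 \in MS U.
Proof.
rewrite inE /is_matching; apply/andP; split; first (apply/andP; split).
- by apply/forall_inP => A; rewrite inE.
- by apply/forall_inP => A; rewrite inE.
- by apply/forall_inP => A; rewrite inE.
Qed.

Lemma FF_ge1 U : 0 < FF U.
Proof. by rewrite /FF card_gt0; apply/finset.set0Pn; exists finset.set0; apply: set0_MS. Qed.

Definition Phi (v : T) (p : T * {set {set T}}) : {set {set T}} :=
  if p.1 == v then p.2 else [set p.1; v] |: p.2.

Lemma comb (U : {set T}) (v : T) : v \in U ->
  FF (U :\ v) + \sum_(u in [set u in U :\ v | e v u]) FF (U :\ v :\ u) <= FF U.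
Proof.
move=> vU.
have [esy eirr] := sg.
set U' := U :\ v.
set N := [set u in U' | e v u].
pose D := [set p : T * {set {set T}} | if p.1 == v then p.2 \in MS U'
             else (p.1 \in N) && (p.2 \in MS (U' :\ p.1))].
have vU' : v \notin U' by rewrite !inE eqxx.
have noV : forall (W : {set T}) (M : {set {set T}}) (A : {set T}), W \subset U' -> M \in MS W -> A \in M -> v \notin A.
  move=> W M A WU MW AM; apply/negP => vA.
  have HA := fintype.subset_trans (MS_sub MW AM) WU.
  by move: (fintype.subsetP HA v vA); rewrite (negbTE vU').
have sub1 : forall u : T, U' :\ u \subset U' by move=> u; apply: subD1set.
have sub0 : U' \subset U by apply: subD1set.
have cardD : #|D| = FF U' + \sum_(u in N) FF (U' :\ u).
  rewrite -sum1_card big_mkcond /=.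
  rewrite (eq_bigr (fun p => (fun u M => if (u, M) \in D then 1 else 0) p.1 p.2));
    last by case.
  rewrite -(pair_big xpredT xpredT (fun u M => if (u, M) \in D then 1 else 0)) /=.
  have gE : forall u, \sum_M (if (u, M) \in D then 1 else 0) =
     if u == v then FF U' else if u \in N then FF (U' :\ u) else 0.
    move=> u; rewrite /D.
    under eq_bigr => M _ do rewrite inE /=.
    case: (u == v).
      by rewrite -big_mkcond sum1_card.
    case: (u \in N) => /=.
      by rewrite -big_mkcond sum1_card.
    by rewrite big1.
  under eq_bigr => u _ do rewrite gE.
  rewrite (bigD1 v) //= eqxx; congr (_ + _).
  have vN : v \notin N by rewrite inE (negbTE vU').
  have -> : \sum_(u in N) FF (U' :\ u) = \sum_(u | u != v) (if u \in N then FF (U' :\ u) else 0).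
    rewrite big_mkcond [in RHS]big_mkcond; apply: eq_bigr => u _.
    by case: (u =P v) => [->|_]; rewrite ?(negbTE vN).
  by apply: eq_bigr => u /negbTE ->.
rewrite -cardD /FF -(card_in_imset (f := Phi v)).
  apply: subset_leq_card; apply/fintype.subsetP => _ /imsetP [[u M] pD ->].
  move: pD; rewrite inE /Phi /=.
  case: eqP => [_ MU'|/eqP uv /andP[uN MU]].
    rewrite inE (MS_match MU') /=; apply/forall_inP => A AM.
    exact: fintype.subset_trans (MS_sub MU' AM) sub0.
  move: uN; rewrite inE => /andP[uU' evu].
  have uU : u \in U by move: uU'; rewrite !inE => /andP[].
  have MM := MS_match MU.
  move: MM; rewrite /is_matching => /andP[/forall_inP Medge /forall_inP Mdis].
  have noUV : forall A, A \in M -> (u \notin A) && (v \notin A).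
    move=> A AM; rewrite (noV _ _ _ (sub1 u) MU AM) andbT.
    apply/negP => uA; move: (fintype.subsetP (MS_sub MU AM) u uA).
    by rewrite !inE eqxx.
  have disUV : forall A, A \in M -> [disjoint [set u; v] & A].
    move=> A AM; have /andP[nu nv] := noUV A AM.
    rewrite disjoint_subset; apply/fintype.subsetP => x; rewrite !inE.
    by case/orP => /eqP ->; [exact: nu | exact: nv].
  rewrite inE; apply/andP; split; first (apply/andP; split).
  - apply/forall_inP => A; rewrite !inE => /orP[/eqP ->|AM]; last exact: Medge.
    by apply/existsP; exists u; apply/existsP; exists v; rewrite esy evu eqxx.
  - apply/forall_inP => A; rewrite !inE => /orP[/eqP ->|AM];
      apply/forall_inP => B; rewrite !inE => /orP[/eqP ->|BM].
    + by rewrite eqxx.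
    + by rewrite (disUV B BM) implybT.
    + by rewrite disjoint_sym (disUV A AM) implybT.
    + exact: (forall_inP (Mdis A AM) B BM).
  - apply/forall_inP => A; rewrite !inE => /orP[/eqP ->|AM].
      by apply/fintype.subsetP => x; rewrite !inE => /orP[] /eqP ->.
    apply: fintype.subset_trans (MS_sub MU AM) _; exact: fintype.subset_trans (sub1 u) sub0.
have Dmem : forall p, (p \in D) = (if p.1 == v then p.2 \in MS U' else (p.1 \in N) && (p.2 \in MS (U' :\ p.1))) by move=> p; rewrite inE.
move=> [u1 M1] [u2 M2]; rewrite !Dmem /Phi /=.
have key : forall (u : T) (M : {set {set T}}), ~~ (u == v) && (u \in N) && (M \in MS (U' :\ u)) ->
    [set u; v] \notin M.
  move=> u M /andP[/andP[_ uN] MU]; apply/negP => /(noV _ _ _ (sub1 u) MU).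
  by rewrite !inE eqxx orbT.
have key2 : forall (M : {set {set T}}) (u' : T) (M' : {set {set T}}), u' != v -> M \in MS U' -> M <> [set u'; v] |: M'.
  move=> M u' M' _ MU' Me.
  have : [set u'; v] \in M by rewrite Me !inE eqxx.
  by move/(noV _ _ _ (subxx _) MU'); rewrite !inE eqxx orbT.
case: eqP => [-> H1|/eqP n1 H1]; case: eqP => [-> H2|/eqP n2 H2] //=.
- by move=> ->.
- by move=> E; case: (@key2 _ _ _ n2 H1 E).
- by move=> E; case: (@key2 _ _ _ n1 H2 (esym E)).
move=> E.
have K1 : [set u1; v] \notin M1 by apply: key; rewrite n1 H1.
have K2 : [set u2; v] \notin M2 by apply: key; rewrite n2 H2.
have u12 : u1 = u2.
  have : [set u1; v] \in [set u2; v] |: M2 by rewrite -E !inE eqxx.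
  rewrite !inE => /orP[/eqP E2|].
    have : u1 \in [set u2; v] by rewrite -E2 !inE eqxx.
    by rewrite !inE (negbTE n1) orbF => /eqP.
  move: H2 => /andP[_ H2] /(noV _ _ _ (sub1 u2) H2).
  by rewrite !inE eqxx orbT.
subst u2; congr (_, _).
by rewrite -(setU1K K1) E setU1K.
Qed.

End Comb.
Local Open Scope ring_scope.
Section Ana.
Variables (R : realType) (T : finType) (e : rel T).
Hypothesis sg : simple_graph e.
Variable w : T -> T -> R.
Hypothesis w0 : forall u t, 0 <= w u t.
Hypothesis wsym : forall u t, w u t = w t u.
Hypothesis we : forall u t, ~~ e u t -> w u t = 0.
Hypothesis w1 : forall u, \sum_t w u t <= 1.

Definition Dw (U : {set T}) : R := \sum_(u in U) \sum_(t in U) w u t.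

Lemma sumD1 (g : T -> R) (U : {set T}) v : v \in U ->
  \sum_(t in U) g t = g v + \sum_(t in U :\ v) g t.
Proof.
move=> vU; rewrite (bigD1 v) //=; congr (_ + _).
by apply: eq_bigl => t; rewrite in_setD1 andbC.
Qed.

Lemma wvv v : w v v = 0.
Proof. by apply: we; have [_ ->] := sg. Qed.

Lemma DwD1 (U : {set T}) v : v \in U ->
  Dw U = Dw (U :\ v) + 2 * \sum_(t in U) w v t.
Proof.
move=> vU; rewrite /Dw (sumD1 (fun u => \sum_(t in U) w u t) vU) /=.
have -> : \sum_(u in U :\ v) \sum_(t in U) w u t =
   \sum_(u in U :\ v) w v u + \sum_(u in U :\ v) \sum_(t in U :\ v) w u t.
  rewrite -big_split /=; apply: eq_bigr => u _; rewrite (sumD1 _ vU) wsym //.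
rewrite [\sum_(t in U) w v t](sumD1 _ vU) wvv add0r.
by rewrite mulr2n mulrDl mul1r; lra.
Qed.

Lemma sub_le1 (U : {set T}) u : \sum_(t in U) w u t <= 1.
Proof.
apply: le_trans (w1 u); rewrite [X in _ <= X](bigID (fun t => t \in U)) /=.
by rewrite lerDl sumr_ge0.
Qed.

Lemma sub_ge0 (U : {set T}) u : 0 <= \sum_(t in U) w u t.
Proof. exact: sumr_ge0. Qed.

Local Notation p x := ((2:R) `^ x).

Lemma p_le x y : x <= y -> p x <= p y.
Proof. by apply: ler_powR; rewrite ler1n. Qed.

Lemma pD x y : p (x + y) = p x * p y.
Proof. by rewrite powRD // pnatr_eq0 implybT. Qed.

Lemma p1 : p 1 = 2.
Proof. by rewrite powRr1. Qed.

Lemma pS x : p (x + 1) = p x * 2.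
Proof. by rewrite pD p1. Qed.

Lemma key_bound n : forall U : {set T}, (#|U| <= n)%N -> p (Dw U / 2) <= (FF e U)%:R.
Proof.
elim: n => [|n IH] U.
  rewrite leqn0 cards_eq0 => /eqP ->.
  rewrite /Dw big_set0 mul0r powRr0 ler1n; exact: FF_ge1.
move=> cU.
have [/eqP U0|] := boolP (U == finset.set0).
  by rewrite U0 /Dw big_set0 mul0r powRr0 ler1n; exact: FF_ge1.
case/finset.set0Pn => v vU.
have [esy eirr] := sg.
set U' := U :\ v.
have cU' : (#|U'| <= n)%N by move: cU; rewrite (cardsD1 v U) vU.
have cU'' : forall u, (#|U' :\ u| <= n)%N.
  by move=> u; apply: leq_trans cU'; apply: subset_leq_card; apply: subD1set.
set N := [set u in U' | e v u].
have Hc := comb sg vU.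
have HcR : (FF e U')%:R + \sum_(u in N) (FF e (U' :\ u))%:R <= (FF e U)%:R :> R.
  by rewrite -natr_sum -natrD ler_nat.
set a := Dw U / 2.
set L := \sum_(t in U) w v t.
have L0 : 0 <= L by exact: sub_ge0.
have L1 : L <= 1 by exact: sub_le1.
have HU' : p (a - L) <= (FF e U')%:R.
  apply: le_trans (IH _ cU'); apply: p_le.
  rewrite /a (DwD1 vU) -/U' -/L; lra.
have Hu : forall u, u \in N -> p (a - L - 1 + w v u) <= (FF e (U' :\ u))%:R.
  move=> u uN; apply: le_trans (IH _ (cU'' u)); apply: p_le.
  have uU' : u \in U' by move: uN; rewrite inE => /andP[].
  have uU : u \in U by move: uU'; rewrite in_setD1 => /andP[].
  have E1 := DwD1 uU'.
  have E2 := DwD1 vU; rewrite -/U' -/L in E2.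
  have E3 := sumD1 (w u) vU; rewrite -/U' in E3.
  have E4 := sub_le1 U u.
  rewrite wsym in E3.
  rewrite /a; lra.
have nsum0 : forall u, 0 <= (FF e (U' :\ u))%:R :> R by move=> u; exact: ler0n.
have [/eqP N0|] := boolP (N == finset.set0).
  have L00 : L = 0.
    rewrite /L big1 // => t tU; apply: we.
    case: (t =P v) => [->|/eqP tv]; first by rewrite eirr.
    apply/negP => evt.
    have : t \in N by rewrite inE in_setD1 tv tU evt.
    by rewrite N0 inE.
  apply: le_trans HcR; rewrite N0 big_set0 addr0.
  by move: HU'; rewrite L00 subr0.
case/finset.set0Pn => u1 u1N.
have Hp0 : forall x, 0 <= p x by move=> x; exact: powR_ge0.
have [/eqP N1|] := boolP (N :\ u1 == finset.set0).
  have LE : L = w v u1.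
    have u1U : u1 \in U by move: u1N; rewrite !inE => /andP[/andP[]].
    rewrite /L (sumD1 _ u1U) big1 ?addr0 // => t; rewrite in_setD1 => /andP[tu1 tU].
    apply: we; case: (t =P v) => [->|/eqP tv]; first by rewrite eirr.
    apply/negP => evt.
    have : t \in N :\ u1 by rewrite in_setD1 tu1 inE in_setD1 tv tU evt.
    by rewrite N1 inE.
  apply: le_trans HcR.
  rewrite (sumD1 _ u1N) N1 big_set0 addr0.
  have h1 := Hu u1 u1N; rewrite -LE in h1.
  have EE : a - L - 1 + L = a - 1 by lra.
  rewrite EE in h1.
  have h2 : p (a - 1) <= p (a - L) by apply: p_le; lra.
  have h3 : p a = p (a - 1) * 2 by rewrite -pS; congr (p _); lra.
  rewrite h3; rewrite -/(p (a - 1)) in h1.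
  move: h1 h2 HU'; set q := p (a - 1); set q' := p (a - L); nra.
case/finset.set0Pn => u2; rewrite in_setD1 => /andP[u21 u2N].
apply: le_trans HcR.
rewrite (sumD1 _ u1N) (sumD1 _ (_ : u2 \in N :\ u1)); last by rewrite in_setD1 u21.
have rest : 0 <= \sum_(t in N :\ u1 :\ u2) (FF e (U' :\ t))%:R :> R by apply: sumr_ge0.
have h1 := Hu u1 u1N.
have h2 := Hu u2 u2N.
have m1 : p (a - L - 1) <= p (a - L - 1 + w v u1) by apply: p_le; have := w0 v u1; lra.
have m2 : p (a - L - 1) <= p (a - L - 1 + w v u2) by apply: p_le; have := w0 v u2; lra.
have h3 : p a <= p (a - L - 1) * 2 * 2.
  rewrite -!pS; apply: p_le; lra.
have h4 : p (a - L) = p (a - L - 1) * 2 by rewrite -pS; congr (p _); lra.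
move: h1 h2 m1 m2 h3 h4 HU' rest.
set q := p (a - L - 1); set r1 := p (a - L - 1 + w v u1); set r2 := p (a - L - 1 + w v u2).
set q' := p (a - L); set q0 := p a.
move=> *; nra.
Qed.

End Ana.
Section Fin.
Variables (T : finType) (e : rel T).
Hypothesis sg : simple_graph e.

Lemma set2_neq (x y t : T) : x != y -> t != y -> [set x; y] != [set x; t].
Proof.
move=> xy ty; apply/negP => /eqP E.
have : y \in [set x; t] by rewrite -E !inE eqxx orbT.
by rewrite !inE [y == x]eq_sym [y == t]eq_sym (negbTE xy) (negbTE ty).
Qed.

Lemma aux1 (x y : T) : x != y -> (\sum_t ([set x; y] == [set x; t] : nat) = 1)%N.
Proof.
move=> xy; rewrite (bigD1 y) //= eqxx big1 // => t ty.
by rewrite (negbTE (set2_neq xy ty)).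
Qed.

Lemma edge_count (u : T) (A : {set T}) : is_edge e A ->
  (\sum_t (A == [set u; t] : nat) = (u \in A : nat))%N.
Proof.
have [esy eirr] := sg.
case/existsP => x /existsP [y /andP[exy /eqP ->]].
have xy : x != y by apply/negP => /eqP xy; move: exy; rewrite xy eirr.
rewrite !inE; case: (u =P x) => [->|/eqP ux] /=; first exact: aux1.
case: (u =P y) => [->|/eqP uy] /=.
  by rewrite finset.setUC; apply: aux1; rewrite eq_sym.
rewrite big1 // => t _; rewrite (_ : ([set x; y] == [set u; t]) = false) //; apply/negP => /eqP E.
have : u \in [set x; y] by rewrite E !inE eqxx.
by rewrite !inE (negbTE ux) (negbTE uy).
Qed.

Lemma sum_count (u : T) (s : seq {set T}) : all (is_edge e) s ->
  (\sum_t count (pred1 [set u; t]) s = count (fun A : {set T} => u \in A) s)%N.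
Proof.
elim: s => [|A s IH] /=; first by rewrite big1.
case/andP => eA es; rewrite big_split /= IH // edge_count //.
Qed.

Lemma edge_pair (u t : T) (s : seq {set T}) : all (is_edge e) s -> ~~ e u t ->
  count (pred1 [set u; t]) s = 0%N.
Proof.
have [esy eirr] := sg.
move=> /allP es net; rewrite (eq_in_count (a2 := pred0)) ?count_pred0 // => A As /=.
apply/negbTE/negP => /eqP AE.
have := es A As; rewrite AE => /existsP [x /existsP [y /andP[exy /eqP E]]].
have xE : x \in [set u; t] by rewrite E !inE eqxx.
have yE : y \in [set u; t] by rewrite E !inE eqxx orbT.
move: xE yE exy net; rewrite !inE => /orP[]/eqP -> /orP[]/eqP ->.
- by rewrite eirr.
- by move=> ->.
- by rewrite esy => ->.
- by rewrite eirr.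
Qed.

End Fin.
Unset Implicit Arguments.
Theorem mainTheorem13 (R : realType) (T : finType) (e : rel T) :
  simple_graph e -> connected_graph e -> K2_fractionally_tiles e ->
  (num_matchings e)%:R `^ (#|T|%:R^-1) >= (2 : R) `^ (2%:R^-1 : R).
Proof.
move=> sg [nT _] [s [sne [sall [k Hk]]]].
have [esy eirr] := sg.
have k0 : (0 < k)%N.
  case: s sne sall Hk => [//|A s] _ /= /andP[eA _] Hk.
  case/existsP: eA => x /existsP [y /andP[_ /eqP E]].
  by rewrite -(Hk x) /= E !inE eqxx.
pose w (u t : T) : R := (count (pred1 [set u; t]) s)%:R / k%:R.
have kR : k%:R != 0 :> R by rewrite pnatr_eq0 -lt0n.
have w0 : forall u t, 0 <= w u t by move=> u t; rewrite /w divr_ge0.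
have wsym : forall u t, w u t = w t u by move=> u t; rewrite /w finset.setUC.
have we : forall u t, ~~ e u t -> w u t = 0.
  by move=> u t net; rewrite /w (edge_pair sg sall net) mul0r.
have wsum : forall u, \sum_t w u t = 1.
  move=> u; rewrite /w -mulr_suml -natr_sum (sum_count sg u sall) Hk.
  by rewrite divff.
have w1 : forall u, \sum_t w u t <= 1 by move=> u; rewrite wsum.
have H := key_bound sg w0 wsym we w1 (leqnn #|[set: T]|).
rewrite FF_setT in H.
have DT : Dw w [set: T] = #|T|%:R.
  rewrite /Dw (eq_bigl xpredT); last by move=> u; rewrite inE.
  have inner : forall i, \sum_(t in [set: T]) w i t = 1.
    by move=> i; rewrite (eq_bigl xpredT) ?wsum // => t; rewrite inE.
  by rewrite (eq_bigr _ (fun i _ => inner i)) sumr_const.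
rewrite DT in H.
set n := #|T|%:R : R in H *.
have n0 : 0 < n by rewrite /n ltr0n.
have -> : (2 : R) `^ (2%:R^-1 : R) = ((2 : R) `^ (n / 2)) `^ (n^-1).
  by rewrite -powRrM; congr (_ `^ _); field; rewrite gt_eqF.
have hr : 0 <= n^-1 by rewrite invr_ge0 ltW.
have h1 : (2:R) `^ (n / 2) \in Num.nneg by rewrite nnegrE powR_ge0.
have h2 : ((num_matchings e)%:R : R) \in Num.nneg by rewrite nnegrE ler0n.
move: (ge0_ler_powR hr h1 h2 H) => /= HH. exact: HH.
Qed.
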